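(* Let $G$, $\mathcal{G}$, the upper layer $l$, the class $i$ and the helper graph $\mathcal{H}_i$ be as in the context, and suppose every virtual node of layer $l$ knows the class and component identifier of each of its old neighbors. Then, in the V-CONGEST model on $G$, where each real node simulates its two virtual copies on layer $l$, the helper graph $\mathcal{H}_i$ can be constructed in $O(\Delta)$ rounds by the following protocol: every type-2 node $v$ that adds a node $v_{\mathcal{C}}$ sends the class $i$ and the identifier of $\mathcal{C}$ to its type-1 neighbors; every type-1 node $w$ receiving such a message checks whether it has no neighbor in $\mathcal{C}$ and a neighbor in another component of class $i$, and if so adds $w_{\mathcal{C}}$ and the edge $\{v_{\mathcal{C}},w_{\mathcal{C}}\}$ and responds to that message.
   Context: $G=(V,E)$ is a finite undirected graph on $n$ nodes with maximum degree $\Delta$. Fix an integer $L$. The virtual graph $\mathcal{G}$ contains $3L$ copies of each $v\in V$: each lower layer $1,\dots,L$ contains one copy of every node; each upper layer $L+1,\dots,2L$ contains a type-1 copy and a type-2 copy of every node. Every copy of $v$ is adjacent to all other copies of $v$ and to all copies of each neighbor of $v$ in $G$. $\Psi$ maps virtual nodes to the corresponding real nodes. There are classes $1,\dots,t$. For a fixed upper layer $l$, the nodes of layers $1,\dots,l-1$ are old nodes, each assigned a class; a component of class $i$ is a connected component of the subgraph of $\mathcal{G}$ induced by the old nodes of class $i$. The helper graph $\mathcal{H}_i[\mathcal{C}]$ for a component $\mathcal{C}$ of class $i$: for each type-2 node $v$ of layer $l$, a node $v_{\mathcal{C}}$ is added iff $\Psi(v)\notin\Psi(\mathcal{C})$,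 $v$ has a neighbor in $\mathcal{C}$, and $v$ has no neighbor in another component of class $i$; for each such $v_{\mathcal{C}}$ and each type-1 neighbor $w$ of $v$ on layer $l$ that has a neighbor in some component $\mathcal{C}'\neq\mathcal{C}$ of class $i$ but no neighbor in $\mathcal{C}$, a node $w_{\mathcal{C}}$ and edge $\{v_{\mathcal{C}},w_{\mathcal{C}}\}$ are added. $\mathcal{H}_i$ is the disjoint union of all $\mathcal{H}_i[\mathcal{C}]$. V-CONGEST model: synchronous rounds in which each node may send one identical message of $O(\log n)$ bits to all its neighbors in $G$. *)

(* Defs.v *)
From mathcomp Require Import all_boot.
Set Implicit Arguments. Unset Strict Implicit. Unset Printing Implicit Defensive.

Section VirtualGraph.
Variables (T : finType) (e : rel T) (L : nat).

(* Virtual nodes: lower copies (v, k) on layer k+1 (1..L);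
   upper copies (v, k, b) on layer L+k+1 (L+1..2L); b = false: type-1, b = true: type-2. *)
Definition vnode := ((T * 'I_L) + (T * 'I_L * bool))%type.

Definition Psi (x : vnode) : T :=
  match x with inl (v, _) => v | inr (v, _, _) => v end.

Definition layer (x : vnode) : nat :=
  match x with inl (_, k) => k.+1 | inr (_, k, _) => L + k.+1 end.

Definition vadj : rel vnode := fun x y =>
  (x != y) && ((Psi x == Psi y) || e (Psi x) (Psi y)).

Variable l : 'I_L.   (* the upper layer L + l + 1 *)
Definition type1 (u : T) : vnode := inr (u, l, false).
Definition type2 (u : T) : vnode := inr (u, l, true).
Definition old (x : vnode) : bool := layer x < L + l.+1.

Variables (cls : vnode -> nat) (i : nat).
Definition oldc (x : vnode) : bool := old x && (cls x == i).

Definition sameComp (x y : vnode) : bool :=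
  connect (fun a b => [&& oldc a, oldc b & vadj a b]) x y.

(* helper node v_C is added, for v = type-2 copy of u, C = component of x *)
Definition HNode (u : T) (x : vnode) : bool :=
  [&& ~~ [exists y, sameComp x y && (Psi y == u)],
      vadj (type2 u) x &
      [forall y, (oldc y && vadj (type2 u) y) ==> sameComp x y]].

(* helper edge {v_C, w_C}, v = type-2 copy of v', w = type-1 copy of w',
   C = component of x *)
Definition HEdge (v' w' : T) (x : vnode) : bool :=
  [&& HNode v' x, vadj (type2 v') (type1 w'),
      [exists y, [&& oldc y, vadj (type1 w') y & ~~ sameComp x y]] &
      [forall y, (oldc y && sameComp x y) ==> ~~ vadj (type1 w') y]].

End VirtualGraph.

Definition msg := seq bool.

Record LocalInput := {
  li_id : nat;
  li_n : nat;
  li_class : nat;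
  li_nbr : nat -> bool;
  li_old : nat -> nat -> nat -> bool  (* li_old y j c: some old virtual neighbour
                                         of u's layer-l copies, a copy of the real
                                         node with id y, has class j and component id c *)
}.

Record Output := {
  o_vC : nat -> bool;          (* o_vC c: type-2 copy of u has node v_C, id(C) = c *)
  o_vE : nat -> nat -> bool;   (* o_vE c y: edge {v_C, w_C}, w = type-1 copy of node with id y *)
  o_wE : nat -> nat -> bool    (* o_wE c y: edge {v_C, w_C}, w = type-1 copy of u,
                                  v = type-2 copy of node with id y *)
}.

Record Alg := {
  a_state : Type;
  a_init : LocalInput -> a_state;
  a_send : a_state -> option msg;     (* one broadcast message (or silence) per round *)
  a_step : a_state -> (nat -> option msg) -> a_state;  (* inbox indexed by sender id *)
  a_out : a_state -> option Output
}.

Section Run.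
Variables (T : finType) (e : rel T) (L : nat) (l : 'I_L)
          (cls : vnode T L -> nat) (i : nat) (cid : vnode T L -> nat) (id : T -> nat).

Definition local_input (u : T) : LocalInput := {|
  li_id := id u;
  li_n := #|T|;
  li_class := i;
  li_nbr := fun y => [exists w, e u w && (id w == y)];
  li_old := fun y j c => [exists x, [&& old l x, vadj e (type1 l u) x,
                                      id (Psi x) == y, cls x == j & cid x == c]]
|}.

Variable A : Alg.

Fixpoint run (r : nat) (u : T) : a_state A :=
  match r with
  | 0 => @a_init A (local_input u)
  | r'.+1 => @a_step A (run r' u)
      (fun y => match [pick w | e u w && (id w == y)] with
                | Some w => @a_send A (run r' w)
                | None => None
                end)
  end.

Definition correct_output (u : T) (o : Output) : Prop :=
  (forall c, o_vC o c <-> exists x, [/\ oldc l cls i x, cid x = c & HNode e l cls i u x]) /\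
  (forall c y, o_vE o c y <-> exists x w,
       [/\ oldc l cls i x, cid x = c, id w = y & HEdge e l cls i u w x]) /\
  (forall c y, o_wE o c y <-> exists x v,
       [/\ oldc l cls i x, cid x = c, id v = y & HEdge e l cls i v u x]).

End Run.

Definition maxdeg (T : finType) (e : rel T) : nat := \max_(u : T) #|[pred w | e u w]|.

(* Main.v *)
From Stdlib Require Import ClassicalEpsilon.
Require Import Defs.
From mathcomp Require Import all_boot zify.
Set Implicit Arguments. Unset Strict Implicit. Unset Printing Implicit Defensive.

Definition B (P : Prop) : bool := if excluded_middle_informative P then true else false.
Lemma BP P : reflect P (B P).
Proof. rewrite /B; case: excluded_middle_informative => H; by constructor. Qed.

Fixpoint enc (w x : nat) : msg := if w is w'.+1 then odd x :: enc w' x./2 else [::].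
Fixpoint dec (s : msg) : nat := if s is b :: s' then b + (dec s').*2 else 0.
Lemma size_enc w x : size (enc w x) = w.
Proof. by elim: w x => [|w IH] x //=; rewrite IH. Qed.
Lemma dec_enc w x : x < 2 ^ w -> dec (enc w x) = x.
Proof.
elim: w x => [|w IH] x /=; first by rewrite expn0 ltnS leqn0 => /eqP.
move=> hx; rewrite IH ?odd_double_half //.
by rewrite ltn_half_double -mul2n -expnS.
Qed.

Section Algo.
Variable k : nat.
Definition Wd (li : LocalInput) := (trunc_log 2 (li_n li)).+1 * k.
Definition Nb (li : LocalInput) := li_n li ^ k.
Definition LO (li : LocalInput) (c : nat) : Prop := exists y, li_old li y (li_class li) c.
Definition nodeC li c : Prop := LO li c /\ (forall y c', li_old li y (li_class li) c' -> c' = c)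
   /\ ~ li_old li (li_id li) (li_class li) c.
Definition okw li c : Prop := (exists c', LO li c' /\ c' <> c) /\ ~ LO li c.
Definition snd0 (li : LocalInput) : option msg :=
  match excluded_middle_informative (exists c, nodeC li c) with
  | left H => Some (enc (Wd li) (proj1_sig (constructive_indefinite_description _ H)))
  | right _ => None end.
Definition respl (li : LocalInput) (in0 : nat -> option msg) : seq nat :=
  [seq y <- iota 0 (Nb li) | li_nbr li y && (if in0 y is Some m then B (okw li (dec m)) else false)].
Record St := { s_li : LocalInput; s_cnt : nat; s_hist : nat -> nat -> option msg }.
Definition sendf (s : St) : option msg :=
  if s_cnt s is j.+1 then
    if j < size (respl (s_li s) (s_hist s 0))
    then Some (enc (Wd (s_li s)) (nth 0 (respl (s_li s) (s_hist s 0)) j)) else None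
  else snd0 (s_li s).
Definition stepf (s : St) (inb : nat -> option msg) : St :=
  {| s_li := s_li s; s_cnt := (s_cnt s).+1;
     s_hist := fun j => if j == s_cnt s then inb else s_hist s j |}.
Definition doneP (s : St) : Prop := exists j, 0 < j < s_cnt s /\ forall y, s_hist s j y = None.
Definition accP (s : St) y : Prop := exists j, 0 < j < s_cnt s /\
   s_hist s j y = Some (enc (Wd (s_li s)) (li_id (s_li s))).
Definition outf (s : St) : option Output :=
  if B (doneP s) then Some {| o_vC := fun c => B (nodeC (s_li s) c);
     o_vE := fun c y => B (nodeC (s_li s) c /\ accP s y);
     o_wE := fun c y => B (exists m, s_hist s 0 y = Some m /\ dec m = c /\ okw (s_li s) c) |}
  else None.
Definition Alg0 : Alg := {| a_state := St;
  a_init := fun li => {| s_li := li; s_cnt := 0; s_hist := fun _ _ => None |};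
  a_send := sendf; a_step := stepf; a_out := outf |}.
End Algo.

Section Main.
Variables (k : nat) (T : finType) (e : rel T) (L : nat) (l : 'I_L) (cls : vnode T L -> nat) (i : nat)
         (cid : vnode T L -> nat) (id : T -> nat).
Hypotheses (hsym : symmetric e) (eirr : irreflexive e) (idinj : injective id).
Hypothesis idlt : forall u, id u < #|T| ^ k.
Hypothesis cidlt : forall x, oldc l cls i x -> cid x < #|T| ^ k.
Hypothesis cidH : forall x y, oldc l cls i x -> oldc l cls i y ->
                 (cid x == cid y) = sameComp e l cls i x y.
Definition R r u : St := run e l cls i cid id (Alg0 k) r u.
Definition LI u := local_input e l cls i cid id u.
Definition inbox u (f : T -> option msg) y :=
  match [pick w | e u w && (id w == y)] with Some w => f w | None => None end.

Lemma inbox_nb u w f : e u w -> inbox u f (id w) = f w.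
Proof.
move=> euw; rewrite /inbox; case: pickP => [w' /andP[_ /eqP /idinj -> //]|H].
by move: (H w); rewrite euw eqxx.
Qed.

Lemma inbox_some u f y m : inbox u f y = Some m -> exists w, [/\ e u w, id w = y & f w = Some m].
Proof.
rewrite /inbox; case: pickP => [w /andP[euw /eqP hid] hf|//].
by exists w.
Qed.

Lemma run_spec r u : [/\ s_li (R r u) = LI u, s_cnt (R r u) = r &
  forall j, j < r -> s_hist (R r u) j = inbox u (fun w => sendf k (R j w))].
Proof.
elim: r u => [|r IH] u; first by split.
have [h1 h2 h3] := IH u.
split => //=; first by rewrite h2.
move=> j; rewrite ltnS leq_eqVlt => /orP[/eqP ->|hj].
  by rewrite h2 eqxx.
rewrite h2 (ltn_eqF hj) h3 //.
Qed.

Definition resp w := respl k (LI w) (inbox w (fun w' => snd0 k (LI w'))).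
Definition W := (trunc_log 2 #|T|).+1 * k.

Lemma send_spec j w : sendf k (R j w) = match j with 0 => snd0 k (LI w)
  | j'.+1 => if j' < size (resp w) then Some (enc W (nth 0 (resp w) j')) else None end.
Proof.
have [h1 h2 h3] := run_spec j w.
rewrite /sendf h2 h1; case: j h1 h2 h3 => [|j] h1 h2 h3 //.
by rewrite h3.
Qed.

Lemma cideq x y : oldc l cls i x -> oldc l cls i y -> (cid x = cid y <-> sameComp e l cls i x y).
Proof. by move=> hx hy; rewrite -cidH //; split => /eqP. Qed.

Lemma oldc_old x : oldc l cls i x -> old l x.
Proof. by case/andP. Qed.

Lemma vadj1 x u : old l x -> vadj e (type1 l u) x = (u == Psi x) || e u (Psi x).
Proof.
move=> hx; rewrite /vadj.
have -> : (type1 l u != x) by apply/eqP => hxe; move: hx; rewrite -hxe /old /= ltnn.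
by [].
Qed.

Lemma vadj2 x u : old l x -> vadj e (type2 l u) x = (u == Psi x) || e u (Psi x).
Proof.
move=> hx; rewrite /vadj.
have -> : (type2 l u != x) by apply/eqP => hxe; move: hx; rewrite -hxe /old /= ltnn.
by [].
Qed.

Lemma vadj21 v w : vadj e (type2 l v) (type1 l w) = (v == w) || e v w.
Proof.
rewrite /vadj.
have -> : (type2 l v != type1 l w) by apply/eqP; case.
by [].
Qed.

Lemma sameComp_old x y : oldc l cls i x -> sameComp e l cls i x y -> oldc l cls i y.
Proof.
move=> hx /connectP [p]; case/lastP: p => [|q z] /=; first by move=> _ ->.
by rewrite rcons_path last_rcons => /andP[_ /and3P[_ hz _]] ->.
Qed.

Lemma sameComp_sym x y : sameComp e l cls i x y = sameComp e l cls i y x.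
Proof.
rewrite /sameComp; apply: sym_connect_sym => a b.
rewrite /vadj eq_sym (eq_sym (Psi a)) hsym.
by case: (oldc l cls i a); case: (oldc l cls i b).
Qed.

Lemma li_old_spec u y c : li_old (LI u) y i c <->
  exists x, [/\ oldc l cls i x, vadj e (type1 l u) x, id (Psi x) = y & cid x = c].
Proof.
split.
  move=> /existsP[x /and5P[ho hv /eqP hy hc /eqP hcid]].
  by exists x; split => //; rewrite /oldc ho hc.
move=> [x [/andP[ho hc] hv hy hcid]]; apply/existsP; exists x.
by rewrite ho hv hy hc hcid !eqxx.
Qed.

Lemma LO_spec u c : LO (LI u) c <->
  exists x, [/\ oldc l cls i x, vadj e (type1 l u) x & cid x = c].
Proof.
split.
  by move=> [y /li_old_spec [x [h1 h2 _ h4]]]; exists x.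
by move=> [x [h1 h2 h3]]; exists (id (Psi x)); apply/li_old_spec; exists x.
Qed.

Lemma nodeC_spec u c : nodeC (LI u) c <->
  exists x, [/\ oldc l cls i x, cid x = c & HNode e l cls i u x].
Proof.
split.
  move=> [/LO_spec [x [hx hv hc]] [huniq hnot]].
  exists x; split => //; apply/and3P; split.
  - apply/negP => /existsP[y' /andP[hs /eqP hpsi]].
    have oy := sameComp_old hx hs.
    apply: hnot; apply/li_old_spec; exists y'; split => //.
    + by rewrite vadj1 ?oldc_old // hpsi eqxx.
    + by rewrite hpsi.
    + by rewrite -hc; apply/(cideq oy hx); rewrite sameComp_sym.
  - by rewrite vadj2 ?oldc_old // -vadj1 ?oldc_old.
  - apply/forallP => y'; apply/implyP => /andP[oy hv2].
    have hcy : cid y' = c.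
      apply: (huniq (id (Psi y'))); apply/li_old_spec; exists y'; split => //.
      by rewrite vadj1 ?oldc_old // -vadj2 ?oldc_old //.
    by apply/(cideq hx oy); rewrite hcy.
move=> [x [hx hc /and3P[hn hv /forallP hall]]]; split; last split.
- apply/LO_spec; exists x; split => //.
  by rewrite vadj1 ?oldc_old // -vadj2 ?oldc_old //.
- move=> y c' /li_old_spec [x' [ox' hv' _ hc']].
  have := hall x'; rewrite ox' vadj2 ?oldc_old // -vadj1 ?oldc_old // hv' /= => hs.
  by rewrite -hc' -hc; apply/(cideq ox' hx); rewrite sameComp_sym.
- move=> /li_old_spec [x' [ox' hv' hid hc']].
  move/negP: hn; apply; apply/existsP; exists x'.
  rewrite (idinj hid) eqxx andbT.
  by apply/(cideq hx ox'); rewrite hc hc'.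
Qed.

Lemma okw_spec w x : oldc l cls i x ->
  (okw (LI w) (cid x) <->
   [exists y, [&& oldc l cls i y, vadj e (type1 l w) y & ~~ sameComp e l cls i x y]] /\
   [forall y, (oldc l cls i y && sameComp e l cls i x y) ==> ~~ vadj e (type1 l w) y]).
Proof.
move=> hx; split.
  move=> [[c' [/LO_spec [x' [ox' hv' hc']] hne]] hnlo]; split.
    apply/existsP; exists x'; rewrite ox' hv' /=.
    apply/negP => hs; apply: hne; rewrite -hc'; apply/(cideq ox' hx); by rewrite sameComp_sym.
  apply/forallP => y; apply/implyP => /andP[oy hs]; apply/negP => hv.
  apply: hnlo; apply/LO_spec; exists y; split => //.
  by symmetry; apply/(cideq hx oy).
move=> [/existsP[y /and3P[oy hv hns]] /forallP hall]; split.
  exists (cid y); split; first by apply/LO_spec; exists y.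
  by move=> /esym /(cideq hx oy) hs; rewrite hs in hns.
move=> /LO_spec [x' [ox' hv' hc']].
have := hall x'; rewrite ox' hv' /=.
by have -> : sameComp e l cls i x x' by apply/(cideq hx ox').
Qed.

Lemma HEdge_spec v w x : oldc l cls i x ->
  (HEdge e l cls i v w x <-> [/\ HNode e l cls i v x, e v w & okw (LI w) (cid x)]).
Proof.
move=> hx; split.
  move=> /and4P[hn hvw ha hb].
  have hok : okw (LI w) (cid x) by apply/(okw_spec w hx).
  split => //.
  move: hvw; rewrite vadj21 => /orP[/eqP hvw|//].
  move: hn => /and3P[_ hv _]; move/forallP: hb => /(_ x); rewrite hx /sameComp connect0 /=.
  by rewrite -hvw vadj1 ?oldc_old // -vadj2 ?oldc_old // hv.
move=> [hn hvw /(okw_spec w hx) [ha hb]].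
by apply/and4P; split => //; rewrite vadj21 hvw orbT.
Qed.
Lemma N_le : #|T| ^ k <= 2 ^ W.
Proof.
rewrite /W expnM; case: k => [|k'] //.
rewrite leq_exp2r //; apply: ltnW; exact: trunc_log_ltn.
Qed.

Lemma dec_encW x : x < #|T| ^ k -> dec (enc W x) = x.
Proof. by move=> hx; apply: dec_enc; apply: leq_trans hx N_le. Qed.

Lemma nodeC_uniq li c c' : nodeC li c -> nodeC li c' -> c = c'.
Proof. by move=> [[y hy] _] [_ [h _]]; apply: (h y). Qed.

Lemma nodeC_lt v c : nodeC (LI v) c -> c < #|T| ^ k.
Proof. by move/nodeC_spec => [x [hx <- _]]; apply: cidlt. Qed.

Lemma snd0_eq v c : nodeC (LI v) c -> snd0 k (LI v) = Some (enc W c).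
Proof.
move=> hc; rewrite /snd0; case: excluded_middle_informative => [H|[]]; last by exists c.
case: (constructive_indefinite_description _ H) => c' hc' /=.
by rewrite (nodeC_uniq hc' hc).
Qed.

Lemma snd0_some v m : snd0 k (LI v) = Some m -> exists c, nodeC (LI v) c /\ m = enc W c.
Proof.
rewrite /snd0; case: excluded_middle_informative => [H|//].
case: (constructive_indefinite_description _ H) => c' hc' /= [<-].
by exists c'.
Qed.

Lemma mem_resp w y : (y \in resp w) = [&& y < #|T| ^ k, li_nbr (LI w) y &
   (if inbox w (fun w' => snd0 k (LI w')) y is Some m then B (okw (LI w) (dec m)) else false)].
Proof.
rewrite /resp /respl mem_filter mem_iota add0n /=. by rewrite [RHS]andbC. Qed.

Lemma mem_resp_nb w v : e w v -> (id v \in resp w) =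
   (if snd0 k (LI v) is Some m then B (okw (LI w) (dec m)) else false).
Proof.
move=> hwv; rewrite mem_resp idlt inbox_nb //.
have -> : li_nbr (LI w) (id v) by apply/existsP; exists v; rewrite hwv eqxx.
by [].
Qed.

Lemma resp_lt w y : y \in resp w -> y < #|T| ^ k.
Proof. by rewrite mem_resp => /andP[]. Qed.

Lemma size_resp w : size (resp w) <= maxdeg e.
Proof.
rewrite /maxdeg; have hb := @leq_bigmax T (fun u => #|[pred w0 | e u w0]|) w. apply: leq_trans hb.
rewrite cardE -(size_map id).
apply: uniq_leq_size; first by rewrite /resp /respl filter_uniq // iota_uniq.
move=> y; rewrite mem_resp => /and3P[_ /existsP[w' /andP[hw' /eqP <-]] _].
by apply: map_f; rewrite mem_enum.
Qed.


Lemma W_le : W <= k.+2 * (trunc_log 2 #|T|).+1.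
Proof. by rewrite /W mulnC; apply: leq_mul => //; rewrite ltnW // ltnS. Qed.

Lemma send_size r u m : sendf k (R r u) = Some m -> size m <= k.+2 * (trunc_log 2 #|T|).+1.
Proof.
rewrite send_spec; case: r => [|j].
  by move/snd0_some => [c [_ ->]]; rewrite size_enc W_le.
by case: ifP => // _ [<-]; rewrite size_enc W_le.
Qed.

Lemma acc_spec r u : doneP (R r u) -> forall y,
  accP k (R r u) y <-> exists w, [/\ e u w, id w = y & id u \in resp w].
Proof.
move=> [j0 [/andP[j0p j0r] hsil]] y.
have [h1 h2 h3] := run_spec r u.
rewrite h2 in j0r.
have hsz : forall w, e u w -> size (resp w) <= j0.-1.
  move=> w euw; have := hsil (id w); rewrite h3 // inbox_nb // send_spec.
  case: j0 j0p {j0r hsil} => [//|j0] _ /=.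
  by case: ifP => // /negbT; rewrite -leqNgt.
rewrite /accP h1 h2; split.
- move=> [j [/andP[jp jr] hj]]; move: hj; rewrite h3 // => /inbox_some [w [euw hw hs]].
  exists w; split => //; move: hs; rewrite send_spec; case: j jp jr => [//|j] _ _.
  case: ifP => // hjs [] heq.
  have hnth : nth 0 (resp w) j \in resp w by apply: mem_nth.
  have : dec (enc W (nth 0 (resp w) j)) = dec (enc W (id u)) by rewrite heq.
  rewrite (dec_encW (resp_lt hnth)) (dec_encW (idlt u)).
  by move=> <-.
- move=> [w [euw <- hin]].
  have hidx : index (id u) (resp w) < size (resp w) by rewrite index_mem.
  have hjr : (index (id u) (resp w)).+1 < r.
    have := hsz w euw; move: hidx j0r j0p; clear; lia.
  exists (index (id u) (resp w)).+1; split; first by rewrite hjr.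
  by rewrite h3 // inbox_nb // send_spec hidx nth_index.
Qed.

Lemma out_correct r u o : outf k (R r u) = Some o -> correct_output e l cls i cid id u o.
Proof.
have [h1 h2 h3] := run_spec r u.
rewrite /outf; case: BP => // hd [<-].
have hr : 0 < r by case: hd => j [/andP[a b] _]; rewrite -h2; apply: leq_trans b.
split; [|split] => /=.
- by move=> c; rewrite h1; split => [/BP/nodeC_spec|/nodeC_spec/BP].
- move=> c y; rewrite h1; split.
  + move=> /BP [/nodeC_spec [x [hx hc hn]] /(acc_spec hd) [w [euw hw hin]]].
    exists x, w; split; [exact: hx|exact: hc|exact: hw|].
    apply/(HEdge_spec u w hx); split; [exact: hn|exact: euw|].
    move: hin; rewrite mem_resp_nb; last by rewrite hsym.
    rewrite hc.
    rewrite (@snd0_eq u c); last by apply/nodeC_spec; exists x.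
    by rewrite dec_encW ?(@nodeC_lt u c) //; [move/BP|apply/nodeC_spec; exists x].
  + move=> [x [w [hx hc hw /HEdge_spec [] // hn euw hok]]].
    apply/BP; split; first by apply/nodeC_spec; exists x.
    apply/(acc_spec hd); exists w; split => //.
    rewrite mem_resp_nb; last by rewrite hsym.
    rewrite (@snd0_eq u (cid x)); last by apply/nodeC_spec; exists x.
    by rewrite dec_encW ?cidlt //; apply/BP.
- move=> c y; rewrite h1 h3 //; split.
  + move=> /BP [m [/inbox_some [v [euv hv]]]]; rewrite send_spec => /snd0_some [c' [hc' ->]].
    rewrite dec_encW; last exact: (@nodeC_lt v).
    move=> [hcc hok]; subst c'.
    move/nodeC_spec: hc' => [x [hx hcx hn]].
    exists x, v; split; [exact: hx|exact: hcx|exact: hv|].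
    apply/(HEdge_spec v u hx); split; [exact: hn|by rewrite hsym|by rewrite hcx].
  + move=> [x [v [hx hc hv /HEdge_spec [] // hn evu hok]]].
    apply/BP; exists (enc W c); rewrite -hv inbox_nb; last by rewrite hsym.
    rewrite send_spec.
    rewrite -hc (@snd0_eq v (cid x)); last by apply/nodeC_spec; exists x.
    by rewrite dec_encW ?cidlt.
Qed.

Lemma out_term u : outf k (R (k.+2 * (maxdeg e).+1) u) <> None.
Proof.
have [h1 h2 h3] := run_spec (k.+2 * (maxdeg e).+1) u.
have hlt : (maxdeg e).+1 < k.+2 * (maxdeg e).+1.
  by rewrite -[X in X < _]mul1n ltn_mul2r.
rewrite /outf; case: BP => // [[]].
exists (maxdeg e).+1; split; first by rewrite h2 hlt.
move=> y; rewrite h3 // /inbox; case: pickP => // w _.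
by rewrite send_spec ltnNge size_resp.
Qed.

End Main.

Unset Implicit Arguments.

Theorem lemma5 (k : nat) :
  exists (c : nat) (A : Alg),
  forall (T : finType) (e : rel T), symmetric e -> irreflexive e ->
  forall (L : nat) (l : 'I_L) (cls : vnode T L -> nat) (i : nat)
         (cid : vnode T L -> nat) (id : T -> nat),
    injective id ->
    (forall u, id u < #|T| ^ k) ->
    (forall x, oldc l cls i x -> cid x < #|T| ^ k) ->
    (forall x y, oldc l cls i x -> oldc l cls i y ->
                 (cid x == cid y) = sameComp e l cls i x y) ->
    (forall r u m, @a_send A (run e l cls i cid id A r u) = Some m ->
                   size m <= c * (trunc_log 2 #|T|).+1) /\
    (forall r u o, @a_out A (run e l cls i cid id A r u) = Some o ->
                   correct_output e l cls i cid id u o) /\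
    (forall u, @a_out A (run e l cls i cid id A (c * (maxdeg e).+1) u) <> None).
Proof.
exists k.+2, (Alg0 k) => T e hsym eirr L l cls i cid id idinj idlt cidlt cidH.
split; [|split].
- move=> r u m; exact: (send_size (k:=k) (e:=e) (l:=l) (cls:=cls) (i:=i) (cid:=cid) (id:=id)).
- move=> r u o; exact: (out_correct (k:=k) (l:=l) hsym idinj idlt cidlt cidH).
- move=> u; exact: (out_term (k:=k) (e:=e) (l:=l) (cls:=cls) (i:=i) (cid:=cid) (id:=id)).
Qed.
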